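(* Let $m\ge n$, $B\in\mathbb R^{n\times m}$ of full row rank, $f:\mathbb R^m\to\mathbb R$ and $h:\mathbb R^n\to\mathbb R$ convex and continuously differentiable with Lipschitz gradients, $\mathcal L(u,p)=f(u)-h(p)+(Bu,p)$, and $(u^*,p^* )$ a saddle point of $\mathcal L$. Let $T_{\mathcal U},\mathcal I_{\mathcal V}$ ($m\times m$) and $T_{\mathcal P},\mathcal I_{\mathcal Q}$ ($n\times n$) be symmetric positive definite. Suppose $h\in\mathcal S^{1,1}_{\mu_{h,T_{\mathcal P}},L_{h,T_{\mathcal P}}}$ w.r.t. $T_{\mathcal P}$ with $L_{h,T_{\mathcal P}}\le1$, $f\in\mathcal S^{1,1}_{\mu_{f,T_{\mathcal U}},L_{f,T_{\mathcal U}}}$ w.r.t. $T_{\mathcal U}$ with $L_{f,T_{\mathcal U}}\le1$, and $f_B$ is strongly convex w.r.t. $\mathcal I_{\mathcal V}$ with constant $\mu_{f_B,\mathcal I_{\mathcal V}}>0$. Define the symmetric TPD field $\mathcal G=(\mathcal G^u,\mathcal G^p)$, $$\mathcal G^u(u,p)=-\mathcal I_{\mathcal V}^{-1}\big(\partial_u\mathcal L(u,p)+B^\top T_{\mathcal P}^{-1}\partial_p\mathcal L(u,p)\big),\qquad \mathcal G^p(u,p)=\mathcal I_{\mathcal Q}^{-1}\big(\partial_p\mathcal L(u,p)-BT_{\mathcal U}^{-1}\partial_u\mathcal L(u,p)\big),$$ and $\mathcal E(u,p)=\frac12\|u-u^*\|^2_{\mathcal I_{\mathcal V}}+\frac12\|p-p^*\|^2_{\mathcal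 I_{\mathcal Q}}$. Then for all $(u,p)$, $$-\nabla\mathcal E(u,p)\cdot\mathcal G(u,p)\ge\mu\,\mathcal E(u,p)+\frac{\mu_{f,T_{\mathcal U}}}{2}\|v-v^*\|^2_{T_{\mathcal U}}+\frac{\mu_{h,T_{\mathcal P}}}{2}\|q-q^*\|^2_{T_{\mathcal P}},$$ where $0<\mu=\min\{\mu_{f_B,\mathcal I_{\mathcal V}},\mu_{h_B,\mathcal I_{\mathcal Q}}\}$. Consequently, if $(u(t),p(t))$ solves $u'=\mathcal G^u(u,p)$, $p'=\mathcal G^p(u,p)$, then $\mathcal E(u(t),p(t))\le e^{-\mu t}\mathcal E(u(0),p(0))$ for all $t>0$.
   Context: $\partial_u\mathcal L(u,p)=\nabla f(u)+B^\top p$, $\partial_p\mathcal L(u,p)=Bu-\nabla h(p)$; a saddle point satisfies $\partial_u\mathcal L(u^*,p^* )=0$, $\partial_p\mathcal L(u^*,p^* )=0$. For SPD $M$, $\|x\|_M=(Mx,x)^{1/2}$; $D_g(y,x)=g(y)-g(x)-(\nabla g(x),y-x)$; $g\in\mathcal S^{1,1}_{\mu_{g,M},L_{g,M}}$ w.r.t. $M$ means $\frac{\mu_{g,M}}2\|x-y\|_M^2\le D_g(y,x)\le\frac{L_{g,M}}2\|x-y\|_M^2$ for all $x,y$ ($\mu_{g,M}\ge0$); strong convexity with constant $\mu_{g,M}$ means the lower bound holds. Define $f_B(u)=f(u)+\frac12(B^\top T_{\mathcal P}^{-1}Bu,u)$, $h_B(p)=h(p)+\frac12(BT_{\mathcal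 U}^{-1}B^\top p,p)$ with strong convexity constant $\mu_{h_B,\mathcal I_{\mathcal Q}}$ w.r.t. $\mathcal I_{\mathcal Q}$; $v=u+T_{\mathcal U}^{-1}B^\top p$, $q=p-T_{\mathcal P}^{-1}Bu$, and $v^*,q^*$ the same expressions at $(u^*,p^* )$. $\nabla\mathcal E\cdot\mathcal G$ means $(\mathcal I_{\mathcal V}(u-u^* ),\mathcal G^u)+(\mathcal I_{\mathcal Q}(p-p^* ),\mathcal G^p)$. *)

(* Defs.v *)
From HB Require Import structures.
From mathcomp Require Import all_boot all_order all_algebra.
From mathcomp Require Import all_classical all_reals all_analysis.
Set Implicit Arguments. Unset Strict Implicit. Unset Printing Implicit Defensive.
Import Order.TTheory GRing.Theory Num.Theory.
Import numFieldNormedType.Exports.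
Local Open Scope ring_scope.

Section Defs.
Variable R : realType.

Definition dot k (x y : 'cV[R]_k) : R := \sum_(i < k) x i 0 * y i 0.

Definition sqnorm k (M : 'M[R]_k) (x : 'cV[R]_k) : R := dot (M *m x) x.

Definition spd k (M : 'M[R]_k) : Prop :=
  M^T = M /\ forall x : 'cV[R]_k, x != 0 -> 0 < sqnorm M x.

Definition bregman k (g : 'cV[R]_k -> R) (gg : 'cV[R]_k -> 'cV[R]_k)
  (y x : 'cV[R]_k) : R := g y - g x - dot (gg x) (y - x).

Definition S11 k (g : 'cV[R]_k -> R) (gg : 'cV[R]_k -> 'cV[R]_k)
  (M : 'M[R]_k) (mu L : R) : Prop :=
  0 <= mu /\ forall x y : 'cV[R]_k,
    mu / 2 * sqnorm M (x - y) <= bregman g gg y x <= L / 2 * sqnorm M (x - y).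

Definition strongly_convex k (g : 'cV[R]_k -> R) (gg : 'cV[R]_k -> 'cV[R]_k)
  (M : 'M[R]_k) (mu : R) : Prop :=
  forall x y : 'cV[R]_k, mu / 2 * sqnorm M (x - y) <= bregman g gg y x.

Definition C1_grad k (g : 'cV[R]_k -> R) (gg : 'cV[R]_k -> 'cV[R]_k) : Prop :=
  (forall x, differentiable g x /\ forall v, 'd g x v = dot (gg x) v)
  /\ continuous gg.

Definition lipschitz_grad k (gg : 'cV[R]_k -> 'cV[R]_k) : Prop :=
  exists K : R, forall x y, `|gg x - gg y| <= K * `|x - y|.

Variables (m n : nat) (B : 'M[R]_(n, m)) (TU : 'M[R]_m) (TP : 'M[R]_n).
Variables (f : 'cV[R]_m -> R) (gf : 'cV[R]_m -> 'cV[R]_m).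
Variables (h : 'cV[R]_n -> R) (gh : 'cV[R]_n -> 'cV[R]_n).

Definition fB (u : 'cV[R]_m) : R := f u + 2^-1 * dot (B^T *m invmx TP *m B *m u) u.
Definition gfB (u : 'cV[R]_m) : 'cV[R]_m := gf u + B^T *m invmx TP *m B *m u.
Definition hB (p : 'cV[R]_n) : R := h p + 2^-1 * dot (B *m invmx TU *m B^T *m p) p.
Definition ghB (p : 'cV[R]_n) : 'cV[R]_n := gh p + B *m invmx TU *m B^T *m p.

(* partial derivatives of L(u,p) = f u - h p + (B u, p) *)
Definition dLu (u : 'cV[R]_m) (p : 'cV[R]_n) : 'cV[R]_m := gf u + B^T *m p.
Definition dLp (u : 'cV[R]_m) (p : 'cV[R]_n) : 'cV[R]_n := B *m u - gh p.

Variables (IV : 'M[R]_m) (IQ : 'M[R]_n).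

Definition Gu (u : 'cV[R]_m) (p : 'cV[R]_n) : 'cV[R]_m :=
  - (invmx IV *m (dLu u p + B^T *m invmx TP *m dLp u p)).
Definition Gp (u : 'cV[R]_m) (p : 'cV[R]_n) : 'cV[R]_n :=
  invmx IQ *m (dLp u p - B *m invmx TU *m dLu u p).

Variables (us : 'cV[R]_m) (ps : 'cV[R]_n).

Definition Ly (u : 'cV[R]_m) (p : 'cV[R]_n) : R :=
  2^-1 * sqnorm IV (u - us) + 2^-1 * sqnorm IQ (p - ps).

Definition gradE_dot_G (u : 'cV[R]_m) (p : 'cV[R]_n) : R :=
  dot (IV *m (u - us)) (Gu u p) + dot (IQ *m (p - ps)) (Gp u p).

Definition vvar (u : 'cV[R]_m) (p : 'cV[R]_n) : 'cV[R]_m := u + invmx TU *m B^T *m p.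
Definition qvar (u : 'cV[R]_m) (p : 'cV[R]_n) : 'cV[R]_n := p - invmx TP *m B *m u.

End Defs.

(* Main.v *)
Require Import Defs.
From HB Require Import structures.
From mathcomp Require Import all_boot all_order all_algebra.
From mathcomp Require Import all_classical all_reals all_analysis.
From mathcomp Require Import ring lra.
Import Order.TTheory GRing.Theory Num.Theory.
Import numFieldNormedType.Exports.
Local Open Scope ring_scope.
Local Open Scope classical_set_scope.
Set Implicit Arguments. Unset Strict Implicit. Unset Printing Implicit Defensive.
Section LA.
Variable R : realType.
Implicit Types k l : nat.

Lemma dotE k (x y : 'cV[R]_k) : dot x y = (x^T *m y) 0 0.
Proof. by rewrite /dot !mxE; apply: eq_bigr => i _; rewrite !mxE. Qed.

Lemma dotC k (x y : 'cV[R]_k) : dot x y = dot y x.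
Proof. by rewrite /dot; apply: eq_bigr => i _; rewrite mulrC. Qed.

Lemma dotDl k (x y z : 'cV[R]_k) : dot (x + y) z = dot x z + dot y z.
Proof. by rewrite /dot -big_split; apply: eq_bigr => i _; rewrite mxE mulrDl. Qed.

Lemma dotDr k (x y z : 'cV[R]_k) : dot z (x + y) = dot z x + dot z y.
Proof. by rewrite dotC dotDl !(dotC z). Qed.

Lemma dotNl k (x y : 'cV[R]_k) : dot (- x) y = - dot x y.
Proof. by rewrite /dot -sumrN; apply: eq_bigr => i _; rewrite mxE mulNr. Qed.

Lemma dotNr k (x y : 'cV[R]_k) : dot y (- x) = - dot y x.
Proof. by rewrite dotC dotNl dotC. Qed.

Lemma dotBl k (x y z : 'cV[R]_k) : dot (x - y) z = dot x z - dot y z.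
Proof. by rewrite dotDl dotNl. Qed.

Lemma dotBr k (x y z : 'cV[R]_k) : dot z (x - y) = dot z x - dot z y.
Proof. by rewrite dotDr dotNr. Qed.

Lemma dotZl k a (x y : 'cV[R]_k) : dot (a *: x) y = a * dot x y.
Proof. by rewrite /dot mulr_sumr; apply: eq_bigr => i _; rewrite mxE mulrA. Qed.

Lemma dotZr k a (x y : 'cV[R]_k) : dot y (a *: x) = a * dot y x.
Proof. by rewrite dotC dotZl dotC. Qed.

Lemma dot0l k (x : 'cV[R]_k) : dot 0 x = 0.
Proof. by rewrite /dot big1 // => i _; rewrite mxE mul0r. Qed.

Lemma dot0r k (x : 'cV[R]_k) : dot x 0 = 0.
Proof. by rewrite dotC dot0l. Qed.

Lemma dotMl k l (A : 'M[R]_(k, l)) x y : dot (A *m x) y = dot x (A^T *m y).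
Proof. by rewrite !dotE trmx_mul mulmxA. Qed.

Lemma dotMr k l (A : 'M[R]_(k, l)) x y : dot y (A *m x) = dot (A^T *m y) x.
Proof. by rewrite dotC dotMl dotC. Qed.

Lemma dot_ge0 k (x : 'cV[R]_k) : 0 <= dot x x.
Proof. by apply: sumr_ge0 => i _; rewrite -expr2 sqr_ge0. Qed.

End LA.
Section SPD.
Variable R : realType.

Lemma sqnorm0 k (M : 'M[R]_k) : sqnorm M 0 = 0.
Proof. by rewrite /sqnorm mulmx0 dot0l. Qed.

Lemma sqnormN k (M : 'M[R]_k) x : sqnorm M (- x) = sqnorm M x.
Proof. by rewrite /sqnorm mulmxN dotNl dotNr opprK. Qed.

Lemma spd_ge0 k (M : 'M[R]_k) x : spd M -> 0 <= sqnorm M x.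
Proof.
move=> [_ H]; have [->|nz] := eqVneq x 0; first by rewrite sqnorm0.
exact/ltW/H.
Qed.

Lemma spd_unit k (M : 'M[R]_k) : spd M -> M \in unitmx.
Proof.
move=> [MT H]; rewrite unitmxE unitfE; apply/negP => /det0P [v vn0 vM].
have : v^T != 0 by apply: contra vn0 => /eqP/(f_equal trmx); rewrite trmxK trmx0 => ->.
move=> /H; rewrite /sqnorm -MT -trmx_mul vM trmx0 dot0l ltxx //.
Qed.

Lemma spd_invT k (M : 'M[R]_k) : spd M -> (invmx M)^T = invmx M.
Proof. by move=> [MT _]; rewrite trmx_inv MT. Qed.

Lemma spd_dotinv k (M : 'M[R]_k) (x y : 'cV[R]_k) : spd M ->
  dot (M *m x) (invmx M *m y) = dot x y.
Proof.
move=> sM; rewrite dotMl; have [MT _] := sM.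
by rewrite MT mulmxA mulmxV ?spd_unit // mul1mx.
Qed.

Lemma S11_key k (g : 'cV[R]_k -> R) gg (M : 'M[R]_k) mu L :
  spd M -> S11 g gg M mu L -> L <= 1 -> forall x y a : 'cV[R]_k,
  mu * sqnorm M (x - y + a) <=
  dot (gg x - gg y) (x - y) + 2 * dot (gg x - gg y) a + sqnorm M a.
Proof.
move=> sM [mu0 H] L1 x y a.
have ha := spd_ge0 a sM.
have /andP [h1 _] := H y (x + a).
have /andP [_ h2] := H x (x + a).
have /andP [h3 _] := H x (y - a).
have /andP [_ h4] := H y (y - a).
have e1 : y - (x + a) = - (x - y + a).
  by rewrite !opprD opprK addrCA addrA.
have e2 : x - (x + a) = - a by rewrite opprD addrA subrr add0r.
have e3 : x - (y - a) = x - y + a by rewrite opprB addrA addrAC.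
have e4 : y - (y - a) = a by rewrite opprB addrA addrAC subrr add0r.
rewrite e1 sqnormN in h1; rewrite e2 sqnormN in h2; rewrite e3 in h3; rewrite e4 in h4.
move: h1 h2 h3 h4; rewrite /bregman.
have e5 : x + a - y = (x - y) + a by rewrite addrAC.
have e6 : x + a - x = a by rewrite addrAC subrr add0r.
have e7 : y - a - x = - (x - y + a) by rewrite !opprD opprK addrC addrA.
have e8 : y - a - y = - a by rewrite addrAC subrr add0r.
rewrite e5 e6 e7 e8 !dotNr !dotDr ?dotBl ?dotBr ?dotDr ?dotNr.
set s := sqnorm M _.
have hL : L / 2 * sqnorm M a <= 1 / 2 * sqnorm M a.
  by apply: ler_wpM2r => //; apply: ler_wpM2r => //; rewrite invr_ge0 ler0n.
move: hL; lra.
Qed.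

End SPD.
Section Main.
Variable R : realType.

Lemma sc_mono k (g : 'cV[R]_k -> R) gg M c x y : strongly_convex g gg M c ->
  c * sqnorm M (x - y) <= dot (gg x - gg y) (x - y).
Proof.
move=> H; have h1 := H x y; have h2 := H y x.
move: h2; rewrite -opprB sqnormN => h2.
move: h1 h2; rewrite /bregman -[y - x]opprB !dotNr dotBl; lra.
Qed.

Lemma zmod4 (V : zmodType) (a b c d : V) : (a + b) - (c + d) = (a - c) + (b - d).
Proof. by rewrite opprD addrACA. Qed.

Lemma core (m n : nat) (B : 'M[R]_(n, m)) (TU IV : 'M[R]_m) (TP IQ : 'M[R]_n)
  (mu_f mu_h mu_fB mu_hB mu : R) (e Df : 'cV[R]_m) (d Dh : 'cV[R]_n) :
  spd TU -> spd IV -> spd TP -> spd IQ ->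
  mu <= mu_fB -> mu <= mu_hB ->
  mu_f * sqnorm TU (e + invmx TU *m B^T *m d) <=
    dot Df e + 2 * dot Df (invmx TU *m B^T *m d) + sqnorm TU (invmx TU *m B^T *m d) ->
  mu_h * sqnorm TP (d - invmx TP *m B *m e) <=
    dot Dh d + 2 * dot Dh (- (invmx TP *m B *m e)) + sqnorm TP (- (invmx TP *m B *m e)) ->
  mu_fB * sqnorm IV e <= dot (Df + B^T *m invmx TP *m B *m e) e ->
  mu_hB * sqnorm IQ d <= dot (Dh + B *m invmx TU *m B^T *m d) d ->
  mu * (2^-1 * sqnorm IV e + 2^-1 * sqnorm IQ d)
    + mu_f / 2 * sqnorm TU (e + invmx TU *m B^T *m d)
    + mu_h / 2 * sqnorm TP (d - invmx TP *m B *m e)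
  <= - (dot (IV *m e) (- (invmx IV *m (Df + B^T *m d + B^T *m invmx TP *m (B *m e - Dh))))
        + dot (IQ *m d) (invmx IQ *m (B *m e - Dh - B *m invmx TU *m (Df + B^T *m d)))).
Proof.
move=> sTU sIV sTP sIQ mf mh Fk Hk FB HB.
rewrite dotNr dotMl (proj1 sIV) mulmxA mulmxV ?spd_unit // mul1mx.
rewrite dotMl (proj1 sIQ) mulmxA mulmxV ?spd_unit // mul1mx.
rewrite ?mulmxDr ?mulmxBr ?mulmxN ?dotDr ?dotBr ?dotNr ?dotDr ?mulmxA.
move: Hk; rewrite sqnormN !dotNr => Hk.
move: FB HB; rewrite !dotDl => FB HB.
have f1 : dot Df e = dot e Df by rewrite dotC.
have f2 : dot Df (invmx TU *m B^T *m d) = dot d (B *m invmx TU *m Df).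
  by rewrite dotMr trmx_mul spd_invT // dotC.
have f3 : sqnorm TU (invmx TU *m B^T *m d) = dot d (B *m invmx TU *m B^T *m d).
  by rewrite /sqnorm -mulmxA spd_dotinv // [LHS]dotC [LHS]dotMl trmxK !mulmxA.
have f4 : dot Dh (invmx TP *m B *m e) = dot e (B^T *m invmx TP *m Dh).
  by rewrite dotMr trmx_mul trmxK spd_invT // dotC.
have f5 : sqnorm TP (invmx TP *m B *m e) = dot e (B^T *m invmx TP *m B *m e).
  by rewrite /sqnorm -mulmxA spd_dotinv // [LHS]dotC [LHS]dotMl !mulmxA.
have f6 : dot e (B^T *m d) = dot d (B *m e) by rewrite dotMr trmxK dotC.
have f7 : dot (B^T *m invmx TP *m B *m e) e = dot e (B^T *m invmx TP *m B *m e) by rewrite dotC.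
have f8 : dot (B *m invmx TU *m B^T *m d) d = dot d (B *m invmx TU *m B^T *m d) by rewrite dotC.
have f9 : dot Dh d = dot d Dh by rewrite dotC.
have g1 : mu * sqnorm IV e <= mu_fB * sqnorm IV e by apply: ler_wpM2r => //; apply: spd_ge0.
have g2 : mu * sqnorm IQ d <= mu_hB * sqnorm IQ d by apply: ler_wpM2r => //; apply: spd_ge0.
lra.
Qed.

Lemma main_ineq (m n : nat) (B : 'M[R]_(n, m))
  (f : 'cV[R]_m -> R) (gf : 'cV[R]_m -> 'cV[R]_m)
  (h : 'cV[R]_n -> R) (gh : 'cV[R]_n -> 'cV[R]_n)
  (us : 'cV[R]_m) (ps : 'cV[R]_n)
  (TU IV : 'M[R]_m) (TP IQ : 'M[R]_n)
  (mu_f L_f mu_h L_h mu_fB mu_hB mu : R) :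
  dLu B gf us ps = 0 -> dLp B gh us ps = 0 ->
  spd TU -> spd IV -> spd TP -> spd IQ ->
  S11 h gh TP mu_h L_h -> L_h <= 1 ->
  S11 f gf TU mu_f L_f -> L_f <= 1 ->
  strongly_convex (fB B TP f) (gfB B TP gf) IV mu_fB ->
  strongly_convex (hB B TU h) (ghB B TU gh) IQ mu_hB ->
  mu <= mu_fB -> mu <= mu_hB ->
  forall (u : 'cV[R]_m) (p : 'cV[R]_n),
      mu * Ly IV IQ us ps u p
        + mu_f / 2 * sqnorm TU (vvar B TU u p - vvar B TU us ps)
        + mu_h / 2 * sqnorm TP (qvar B TP u p - qvar B TP us ps)
      <= - gradE_dot_G B TU TP gf gh IV IQ us ps u p.
Proof.
move=> dU dP sTU sIV sTP sIQ Sh Lh Sf Lf scf sch mf mh u p.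
have Fk := S11_key sTU Sf Lf u us (invmx TU *m B^T *m (p - ps)).
have Hk := S11_key sTP Sh Lh p ps (- (invmx TP *m B *m (u - us))).
have FB := sc_mono u us scf.
have HB := sc_mono p ps sch.
have ev : vvar B TU u p - vvar B TU us ps = u - us + invmx TU *m B^T *m (p - ps).
  by rewrite /vvar zmod4 mulmxBr.
have eq : qvar B TP u p - qvar B TP us ps = p - ps - invmx TP *m B *m (u - us).
  by rewrite /qvar zmod4 mulmxBr [in RHS]opprD.
rewrite ev eq.
have eU : dLu B gf u p = (gf u - gf us) + B^T *m (p - ps).
  have gfs : gf us = - (B^T *m ps) by apply/eqP; rewrite -addr_eq0; apply/eqP.
  by rewrite /dLu mulmxBr gfs opprK addrACA subrr addr0.
have eP : dLp B gh u p = B *m (u - us) - (gh p - gh ps).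
  have gps : gh ps = B *m us by apply/eqP; rewrite eq_sym -subr_eq0 -dP.
  by rewrite /dLp mulmxBr gps opprB addrA subrK.
rewrite /Ly /gradE_dot_G /Gu /Gp eU eP.
move: FB HB; rewrite /gfB /ghB !zmod4 -(mulmxBr (B^T *m invmx TP *m B)) -(mulmxBr (B *m invmx TU *m B^T)) => FB HB.
exact: (core sTU sIV sTP sIQ mf mh Fk Hk FB HB).
Qed.
End Main.
Section Coerc.
Variable R : realType.

Definition csum k (M : 'M[R]_k) : R := \sum_i \sum_j `|M i j|.

Lemma csum_ge0 k (M : 'M[R]_k) : 0 <= csum M.
Proof. by apply: sumr_ge0 => i _; apply: sumr_ge0 => j _. Qed.

Lemma coord_le k (z : 'cV[R]_k) i : z i 0 ^+ 2 <= dot z z.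
Proof.
rewrite /dot (bigD1 i) //= -expr2 lerDl; apply: sumr_ge0 => j _.
by rewrite -expr2 sqr_ge0.
Qed.

Lemma quad_bound k (M : 'M[R]_k) z : dot (M *m z) z <= csum M * dot z z.
Proof.
rewrite /dot /csum mulr_suml; apply: ler_sum => i _.
rewrite mxE mulr_suml mulr_suml; apply: ler_sum => j _.
have hi := coord_le z i; have hj := coord_le z j.
have hb : `|z j 0 * z i 0| <= dot z z.
  rewrite ler_norml; apply/andP; split; move: hi hj; rewrite /dot; set S := \sum_(_ < _) _; nra.
rewrite -mulrA (le_trans (ler_norm _)) // normrM ler_wpM2l //.
Qed.

Lemma spd_CS k (K : 'M[R]_k) a b : spd K ->
  dot (K *m a) b ^+ 2 <= sqnorm K a * sqnorm K b.
Proof.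
move=> sK; have [KT _] := sK.
have [->|bn0] := eqVneq b 0; first by rewrite dot0r sqnorm0 expr0n /= mulr0.
have bp : 0 < sqnorm K b by apply: (proj2 sK).
set X := dot (K *m a) b; set Bb := sqnorm K b.
pose t := X / Bb.
have := spd_ge0 (a - t *: b) sK.
rewrite /sqnorm mulmxBr !dotBl !dotBr -scalemxAr !dotZl !dotZr.
have -> : dot (K *m b) a = X by rewrite /X dotMl KT dotC.
rewrite -/Bb -/(sqnorm K a) -/X.
have tB : t * Bb = X by rewrite /t mulfVK // gt_eqF.
rewrite -[dot (K *m b) b]/Bb => H.
have H2 : 0 <= sqnorm K a - t * X by move: H; rewrite tB; lra.
have H3 := mulr_ge0 H2 (ltW bp).
have -> : X ^+ 2 = t * X * Bb by rewrite mulrAC tB expr2.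
move: H3; rewrite mulrBl -/Bb; lra.
Qed.

Lemma spd_coerc k (K : 'M[R]_k) : spd K -> exists C, 0 <= C /\ forall z, dot z z <= C * sqnorm K z.
Proof.
move=> sK; have [KT _] := sK; have Ku := spd_unit sK.
exists (csum (invmx K)); split; first exact: csum_ge0.
move=> z.
have h := spd_CS (invmx K *m z) z sK.
move: h; rewrite mulmxA mulmxV // mul1mx.
have -> : sqnorm K (invmx K *m z) = dot z (invmx K *m z) by rewrite /sqnorm mulmxA mulmxV // mul1mx.
have h2 := quad_bound (invmx K) z.
rewrite dotC in h2.
have h3 := dot_ge0 z; have h4 := spd_ge0 z sK; have h5 := csum_ge0 (invmx K).
move=> h.
have h6 : dot z z * dot z z <= dot z z * (csum (invmx K) * sqnorm K z).
  rewrite -expr2 (le_trans h) // mulrCA mulrA; by apply: ler_wpM2r.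
move: h3; rewrite le0r => /orP [/eqP ->|hp]; first by rewrite mulr_ge0.
by rewrite -(ler_pM2l hp).
Qed.

End Coerc.
Section HBsc.
Variable R : realType.

Lemma hB_sc (m n : nat) (B : 'M[R]_(n, m)) (h : 'cV[R]_n -> R) (gh : 'cV[R]_n -> 'cV[R]_n)
  (TU : 'M[R]_m) (TP IQ : 'M[R]_n) mu_h L_h :
  \rank B = n -> spd TU -> spd TP -> spd IQ -> S11 h gh TP mu_h L_h ->
  exists c : R, 0 < c /\ strongly_convex (hB B TU h) (ghB B TU gh) IQ c.
Proof.
move=> rB sTU sTP sIQ [muh0 Sh].
pose K := B *m invmx TU *m B^T.
have KT : K^T = K by rewrite /K !trmx_mul trmxK spd_invT // mulmxA.
have sqK : forall z, sqnorm K z = sqnorm TU (invmx TU *m (B^T *m z)).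
  move=> z; rewrite /sqnorm /K -!mulmxA dotMl.
  by rewrite [in RHS]mulmxA mulmxV ?spd_unit // mul1mx dotC.
have sK : spd K.
  split => // z zn0; rewrite sqK; apply: (proj2 sTU).
  apply/negP => /eqP w0.
  have y0 : B^T *m z = 0.
    by rewrite -[B^T *m z]mul1mx -(mulmxV (spd_unit sTU)) -mulmxA w0 mulmx0.
  have rf : row_free B by rewrite /row_free rB.
  have : z^T *m B = 0 *m B by rewrite mul0mx -[B]trmxK -trmx_mul y0 trmx0.
  move/(row_free_inj rf) => zt0; move/negP: zn0; apply.
  by rewrite -[z]trmxK zt0 trmx0.
have [C [C0 HC]] := spd_coerc sK.
pose c := (1 + csum IQ * C)^-1.
have Q0 : 0 <= csum IQ * C by rewrite mulr_ge0 // csum_ge0.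
have c0 : 0 < c by rewrite /c invr_gt0; lra.
exists c; split => // x y.
have -> : bregman (hB B TU h) (ghB B TU gh) y x = bregman h gh y x + 2^-1 * sqnorm K (y - x).
  rewrite /bregman /hB /ghB /sqnorm -/K.
  rewrite mulmxBr !dotBl !dotBr !dotDl.
  have -> : dot (K *m y) x = dot (K *m x) y by rewrite dotMl KT dotC.
  lra.
have /andP [h1 _] := Sh x y.
have h2 : 0 <= mu_h / 2 * sqnorm TP (x - y) by rewrite mulr_ge0 ?spd_ge0 // divr_ge0.
have h3 : sqnorm IQ (x - y) <= csum IQ * dot (x - y) (x - y) := quad_bound IQ (x - y).
have h4 := HC (x - y).
have h5 : csum IQ * dot (x - y) (x - y) <= csum IQ * (C * sqnorm K (x - y)).
  by rewrite ler_wpM2l // csum_ge0.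
have h6 : c * sqnorm IQ (x - y) <= c * (csum IQ * C * sqnorm K (x - y)).
  by apply: ler_wpM2l; [exact: ltW | rewrite -mulrA; exact: le_trans h3 h5].
have h7 : c * (csum IQ * C) <= 1.
  rewrite /c mulrC -ler_pdivlMr ?invrK ?mul1r; [lra | exact: c0].
have h8 : c * (csum IQ * C * sqnorm K (x - y)) <= sqnorm K (x - y).
  by rewrite mulrA -[X in _ <= X]mul1r ler_wpM2r ?spd_ge0.
rewrite -[y - x]opprB sqnormN.
lra.
Qed.

End HBsc.
Section ODE.
Variable R : realType.

Lemma is_derive_coord k (x : R -> 'cV[R]_k) (t : R) (dx : 'cV[R]_k) i :
  is_derive t 1 x dx -> is_derive t 1 (fun s => x s i 0) (dx i 0).
Proof.
move=> [dv dval].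
have cv : (fun h : R => h^-1 *: ((x \o shift t) (h *: 1) - x t)) @ 0^' --> dx.
  rewrite -dval; exact: dv.
have cc := continuous_cvg _ (@coord_continuous R k 1 i 0 dx) cv.
have e : (fun h : R => h^-1 *: (((fun s => x s i 0) \o shift t) (h *: 1) - x t i 0)) =
   ((fun M : 'M[R]_(k,1) => M i 0) \o (fun h : R => h^-1 *: ((x \o shift t) (h *: 1) - x t))).
  by apply/funext => h /=; rewrite !mxE.
have cv2 : (fun h : R => h^-1 *: (((fun s => x s i 0) \o shift t) (h *: 1) - x t i 0)) @ 0^' --> dx i 0.
  rewrite e; exact: cc.
split; first exact: (cvgP _ cv2).
exact: cvg_lim.
Qed.

End ODE.
Section ODE2.
Variable R : realType.

Lemma sqnorm_sum k (M : 'M[R]_k) y : sqnorm M y = \sum_i \sum_j M i j * (y j 0 * y i 0).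
Proof.
rewrite /sqnorm /dot; apply: eq_bigr => i _; rewrite mxE mulr_suml.
by apply: eq_bigr => j _; rewrite mulrA.
Qed.

Lemma is_derive_sqnorm k (M : 'M[R]_k) (c : 'cV[R]_k) (x : R -> 'cV[R]_k) (t : R) dx :
  is_derive t 1 x dx ->
  is_derive t 1 (fun s => sqnorm M (x s - c))
    (dot (M *m dx) (x t - c) + dot (M *m (x t - c)) dx).
Proof.
move=> D.
have DY : forall j, is_derive t 1 (fun s => x s j 0 - c j 0) (dx j 0).
  move=> j; have := is_deriveB (is_derive_coord j D) (is_derive_cst (c j 0) t 1).
  by rewrite subr0.
have Dij : forall i j, is_derive t 1
   (fun s => M i j * ((x s j 0 - c j 0) * (x s i 0 - c i 0)))
   (M i j * ((x t j 0 - c j 0) * dx i 0 + (x t i 0 - c i 0) * dx j 0)).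
  move=> i j; exact: (is_deriveZ (M i j) (is_deriveM (DY j) (DY i))).
have Di : forall i, is_derive t 1
   (fun s => \sum_j M i j * ((x s j 0 - c j 0) * (x s i 0 - c i 0)))
   (\sum_j M i j * ((x t j 0 - c j 0) * dx i 0 + (x t i 0 - c i 0) * dx j 0)).
  move=> i; have := is_derive_sum (Dij i); rewrite fct_sumE; exact.
have := is_derive_sum Di; rewrite fct_sumE => H.
have -> : (fun s => sqnorm M (x s - c)) =
   (fun s => \sum_i \sum_j M i j * ((x s j 0 - c j 0) * (x s i 0 - c i 0))).
  by apply/funext => s; rewrite sqnorm_sum; apply: eq_bigr => i _; apply: eq_bigr => j _; rewrite !mxE.
apply: (is_derive_eq H).
rewrite /dot -big_split /=; apply: eq_bigr => i _.
rewrite !mxE !mulr_suml -big_split /=; apply: eq_bigr => j _.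
rewrite !mxE; ring.
Qed.

End ODE2.
Section ODE3.
Variable R : realType.

Lemma cvg_sqnorm k (M : 'M[R]_k) (c : 'cV[R]_k) (x : R -> 'cV[R]_k) (F : set_system R)
  (FF : Filter F) (x0 : 'cV[R]_k) :
  x s @[s --> F] --> x0 -> sqnorm M (x s - c) @[s --> F] --> sqnorm M (x0 - c).
Proof.
move=> cx.
have cxc : (x s - c) @[s --> F] --> x0 - c by apply: cvgB => //; exact: cvg_cst.
have co : forall j, (x s - c) j 0 @[s --> F] --> (x0 - c) j 0.
  move=> j; exact: (continuous_cvg _ (@coord_continuous R k 1 j 0 (x0 - c)) cxc).
have -> : (fun s => sqnorm M (x s - c)) =
   (fun s => \sum_i \sum_j M i j * ((x s - c) j 0 * (x s - c) i 0)).
  by apply/funext => s; rewrite sqnorm_sum.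
rewrite sqnorm_sum.
apply: cvg_big => //; first exact: add_continuous.
move=> i _.
apply: cvg_big => //; first exact: add_continuous.
move=> j _.
apply: cvgM; first exact: cvg_cst.
exact: cvgM.
Qed.

End ODE3.
Section ODE4.
Variable R : realType.

Lemma is_derive_expRM (a s : R) :
  is_derive s 1 (fun x => expR (a * x)) (a * expR (a * s)).
Proof.
have Df : is_derive s (1:R) (fun x : R => a * x) a.
  have := is_deriveZ a (is_derive_id s (1:R)).
  by rewrite -[a *: (1:R)]/(a * 1) mulr1.
have dg : derivable expR (a * s) 1 by have [] := is_derive_expR (a * s).
have df : derivable (fun x : R => a * x) s 1 by have [] := Df.
have dc : derivable (expR \o (fun x : R => a * x)) s 1.
  apply/derivable1_diffP; apply: differentiable_comp; exact/derivable1_diffP.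
apply: DeriveDef; first exact: dc.
rewrite -derive1E (derive1_comp df dg) !derive1E.
rewrite (@derive_val _ _ _ _ _ _ _ (is_derive_expR (a * s))).
by rewrite (@derive_val _ _ _ _ _ _ _ Df) mulrC.
Qed.

Lemma cont_of_derive (f : R -> R) (s df : R) : is_derive s 1 f df -> {for s, continuous f}.
Proof.
move=> [d _]; apply: differentiable_continuous; exact/derivable1_diffP.
Qed.

Lemma decay (mu : R) (E dE : R -> R) :
  (forall t : R, 0 < t -> is_derive t 1 E (dE t)) ->
  (forall t : R, 0 < t -> dE t <= - mu * E t) ->
  E x @[x --> 0^'+] --> E 0 ->
  forall t : R, 0 < t -> E t <= expR (- mu * t) * E 0.
Proof.
move=> D dle c0 t t0.
pose phi := fun s => expR (mu * s) * E s.
pose dphi := fun s => expR (mu * s) * dE s + E s * (mu * expR (mu * s)).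
have Dphi : forall s : R, 0 < s -> is_derive s 1 phi (dphi s).
  move=> s s0; exact: (is_deriveM (is_derive_expRM mu s) (D s s0)).
have [c c0t hc] : exists2 c, c \in `]0, t[%R & phi t - phi 0 = dphi c * (t - 0).
  apply: MVT => //.
    by move=> x; rewrite in_itv /= => /andP [x0 _]; exact: Dphi.
  apply/(continuous_within_itvP _ t0); split.
  - move=> x; rewrite in_itv /= => /andP [x0 _].
    exact: (cont_of_derive (Dphi x x0)).
  - apply: cvgM => //.
    apply: cvg_at_right_filter; exact: (cont_of_derive (is_derive_expRM mu 0)).
  - apply: cvg_at_left_filter; exact: (cont_of_derive (Dphi t t0)).
move: c0t; rewrite in_itv /= => /andP [cp _].
have dn : dphi c <= 0.
  rewrite /dphi; have := dle c cp; have := expR_gt0 (mu * c) => ep hd.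
  have : expR (mu * c) * (dE c + mu * E c) <= 0.
    by rewrite pmulr_rle0 //; lra.
  lra.
have : phi t <= phi 0.
  have : dphi c * (t - 0) <= 0 by rewrite subr0 pmulr_lle0.
  lra.
rewrite /phi mulr0 expR0 mul1r => H.
have -> : E t = expR (- mu * t) * (expR (mu * t) * E t).
  by rewrite mulrA -expRD mulNr addNr expR0 mul1r.
by rewrite ler_pM2l ?expR_gt0.
Qed.

End ODE4.
Unset Implicit Arguments. Set Strict Implicit.
Theorem theorem5p3 (R : realType) (m n : nat) (B : 'M[R]_(n, m))
  (f : 'cV[R]_m -> R) (gf : 'cV[R]_m -> 'cV[R]_m)
  (h : 'cV[R]_n -> R) (gh : 'cV[R]_n -> 'cV[R]_n)
  (us : 'cV[R]_m) (ps : 'cV[R]_n)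
  (TU IV : 'M[R]_m) (TP IQ : 'M[R]_n)
  (mu_f L_f mu_h L_h mu_fB : R) :
  (n <= m)%N ->
  \rank B = n ->
  C1_grad f gf -> lipschitz_grad gf ->
  C1_grad h gh -> lipschitz_grad gh ->
  (* (us, ps) is a saddle point: dL/du = 0 and dL/dp = 0 *)
  dLu B gf us ps = 0 -> dLp B gh us ps = 0 ->
  spd TU -> spd IV -> spd TP -> spd IQ ->
  S11 h gh TP mu_h L_h -> L_h <= 1 ->
  S11 f gf TU mu_f L_f -> L_f <= 1 ->
  0 < mu_fB -> strongly_convex (fB B TP f) (gfB B TP gf) IV mu_fB ->
  (exists c : R, 0 < c /\ strongly_convex (hB B TU h) (ghB B TU gh) IQ c) /\
  forall mu_hB : R, 0 < mu_hB ->
    strongly_convex (hB B TU h) (ghB B TU gh) IQ mu_hB ->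
    let mu := Num.min mu_fB mu_hB in
    0 < mu /\
    (forall (u : 'cV[R]_m) (p : 'cV[R]_n),
      mu * Ly IV IQ us ps u p
        + mu_f / 2 * sqnorm TU (vvar B TU u p - vvar B TU us ps)
        + mu_h / 2 * sqnorm TP (qvar B TP u p - qvar B TP us ps)
      <= - gradE_dot_G B TU TP gf gh IV IQ us ps u p) /\
    (forall (uu : R -> 'cV[R]_m) (pp : R -> 'cV[R]_n),
      (forall t : R, 0 < t ->
         is_derive t (1 : R) uu (Gu B TP gf gh IV (uu t) (pp t)) /\
         is_derive t (1 : R) pp (Gp B TU gf gh IQ (uu t) (pp t))) ->
      uu x @[x --> 0^'+] --> uu 0 ->
      pp x @[x --> 0^'+] --> pp 0 ->
      forall t : R, 0 < t ->
        Ly IV IQ us ps (uu t) (pp t) <= expR (- mu * t) * Ly IV IQ us ps (uu 0) (pp 0)).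
Proof.
move=> _ rB _ _ _ _ dU dP sTU sIV sTP sIQ Sh Lh Sf Lf fB0 scf.
split; first exact: (hB_sc rB sTU sTP sIQ Sh).
move=> mu_hB hB0 sch mu.
have mu0 : 0 < mu by rewrite /mu lt_min fB0 hB0.
have mf : mu <= mu_fB by rewrite /mu ge_min lexx.
have mh : mu <= mu_hB by rewrite /mu ge_min lexx orbT.
have INEQ := main_ineq dU dP sTU sIV sTP sIQ Sh Lh Sf Lf scf sch mf mh.
split => //; split => //.
move=> uu pp D cu cp t t0.
apply: (@decay R mu (fun s => Ly IV IQ us ps (uu s) (pp s))
   (fun s => gradE_dot_G B TU TP gf gh IV IQ us ps (uu s) (pp s))) => //.
- move=> s s0; have [Du Dp] := D s s0.
  have H1 := is_deriveD (is_deriveZ (2^-1) (is_derive_sqnorm IV us Du))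
                        (is_deriveZ (2^-1) (is_derive_sqnorm IQ ps Dp)).
  apply: (is_derive_eq H1).
  rewrite /gradE_dot_G.
  have f1 : dot (IV *m Gu B TP gf gh IV (uu s) (pp s)) (uu s - us) =
            dot (IV *m (uu s - us)) (Gu B TP gf gh IV (uu s) (pp s)).
    by rewrite dotMl (proj1 sIV) dotC.
  have f2 : dot (IQ *m Gp B TU gf gh IQ (uu s) (pp s)) (pp s - ps) =
            dot (IQ *m (pp s - ps)) (Gp B TU gf gh IQ (uu s) (pp s)).
    by rewrite dotMl (proj1 sIQ) dotC.
  have sc : forall a b : R, a *: b = a * b by [].
  rewrite f1 f2 !sc; lra.
- move=> s s0.
  have := INEQ (uu s) (pp s).
  have [mf0 _] := Sf; have [mh0 _] := Sh.
  have a1 : 0 <= mu_f / 2 * sqnorm TU (vvar B TU (uu s) (pp s) - vvar B TU us ps).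
    by rewrite mulr_ge0 ?divr_ge0 ?spd_ge0.
  have a2 : 0 <= mu_h / 2 * sqnorm TP (qvar B TP (uu s) (pp s) - qvar B TP us ps).
    by rewrite mulr_ge0 ?divr_ge0 ?spd_ge0.
  rewrite mulNr; lra.
- rewrite /Ly; apply: cvgD.
    by apply: cvgM; [exact: cvg_cst | exact: cvg_sqnorm].
  by apply: cvgM; [exact: cvg_cst | exact: cvg_sqnorm].
Qed.
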